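(* For every CABA framework $F_c$, $\mathit{GrCInst}(\mathit{CArg})=\mathit{GrCInst}(\mathit{MGCArg})$.
   Context: Conventions. $\mathsf X$ denotes a tuple of variables and $\mathsf t$ a tuple of terms. A substitution $\vartheta=\{X_1/t_1,\dots,X_n/t_n\}$ maps distinct variables to terms; $e\vartheta$ replaces each occurrence of $X_i$ in $e$ by $t_i$; $\{\mathsf X/\mathsf t\}$ maps $\mathsf X$ componentwise to $\mathsf t$. An object is ground if it has no variables. Theory of constraints. $\mathcal{CT}$ is a first-order theory with equality whose atomic formulas form the set $\mathcal C$ of constraints; a finite set $\{c_1,\dots,c_n\}\subseteq\mathcal C$ is consistent if $\mathcal{CT}\models\exists(c_1\wedge\dots\wedge c_n)$. CABA framework $F_c=\langle\mathcal L_c,\mathcal C,\mathcal R,\mathcal{CT},\mathcal A,\overline{\cdot}\rangle$: $\mathcal L_c$ a set of atoms; $\mathcal C\subseteq\mathcal L_c$ the constraints of $\mathcal{CT}$; $\mathcal R$ a set of rules $s_0\leftarrow s_1,\dots,s_m$ ($s_0\in\mathcal L_c\setminus\mathcal C$, $s_i\in\mathcal L_c$), in normalised form $p(\mathsf X_0)\leftarrow C,p_1(\mathsf X_1),\dots,p_m(\mathsf X_m)$ with $C\subseteq\mathcal C$ and each $\mathsf X_i$ a tuple of distinct variables; $\mathcal A\subseteq\mathcal L_c\setminus\mathcal C$ a nonempty set of assumptions that are not heads of rules; $\overline\cdot:\mathcal A\to\mathcal L_c\setminus\mathcal C$ a total contrary map with $\overline{p(\mathsf t)}=cp(\mathsf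 t)$ for a fixed predicate $cp$ per assumption predicate $p$; $\mathcal L_c,\mathcal C,\mathcal A$ predicate closed. Tight constrained argument $C\cup A\vdash_R s$ (consistent $C\subseteq\mathcal C$, $A\subseteq\mathcal A$, $R\subseteq\mathcal R$, $s\in\mathcal L_c\setminus\mathcal C$): a finite tree with root $s$ in which every non-leaf node $p(\mathsf t)$ has as children exactly $s_1\vartheta,\dots,s_m\vartheta$ for exactly one renamed-apart copy $p(\mathsf X)\leftarrow s_1,\dots,s_m$ of a rule in $R$, $\vartheta=\{\mathsf X/\mathsf t\}$ (or the single child true for a fact), every leaf being a constraint in $C$, an assumption in $A$ or true; $C,A,R$ are exactly the constraints, assumptions and rules of the tree. Most general: tight with claim of the form $p(\mathsf X)$. A constrained argument is $C'\cup A'\vdash_R s'$ such that there are a tight constrained argument $C\cup A\vdash_R s$, a substitution $\vartheta$ and $D\subseteq\mathcal C$ with $C'=C\vartheta\cup D$, $A'=A\vartheta$, $s'=s\vartheta$ and $C'$ consistent. $\alpha'=C'\cup A'\vdash_R s'$ is a constrained instance (via $\vartheta$, $D$) of a constrained argument $\alpha=C\cup A\vdash_R s$ if $C'=C\vartheta\cup D$, $A'=A\vartheta$, $s'=s\vartheta$ and $C'$ is consistent. $\mathit{MGCArg}$, $\mathit{CArg}$: sets of most general and of all constrained arguments of $F_c$. $\mathit{GrCInst}(\alpha)$ is the set of ground constrained instances of $\alpha$, and $\mathit{GrCInst}(\Gamma)=\bigcup_{\alpha\in\Gamma}\mathit{GrCInst}(\alpha)$. *)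

(* Defs.v *)
From Stdlib Require Import List.
Import ListNotations.




Section CABA.

(* F : function symbols, P : predicate symbols.  Variables are natural numbers
   (a countably infinite supply, as needed for renaming apart). *)
Context {F P : Type}.

Inductive term : Type :=
| Var (x : nat)
| Fn (f : F) (ts : list term).

Record atom : Type := Atom { pred_of : P; args_of : list term }.

(* substitutions are total maps from variables to terms; applying one to a
   finite object only depends on finitely many of its values *)
Definition subst := nat -> term.

Fixpoint tsubst (th : subst) (t : term) : term :=
  match t with
  | Var x => th x
  | Fn f ts => Fn f (map (tsubst th) ts)
  end.

Definition asubst (th : subst) (a : atom) : atom :=
  Atom (pred_of a) (map (tsubst th) (args_of a)).

Fixpoint tvars (t : term) : list nat :=
  match t with
  | Var x => [x]
  | Fn _ ts => flat_map tvars ts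
  end.

Definition avars (a : atom) : list nat := flat_map tvars (args_of a).

Definition aground (a : atom) : Prop := avars a = [].

Fixpoint mk_subst (xs : list nat) (ts : list term) : subst :=
  match xs, ts with
  | x :: xs', t :: ts' => fun y => if Nat.eqb y x then t else mk_subst xs' ts' y
  | _, _ => Var
  end.

Record rule : Type := Rule { rhead : P; rvars : list nat; rbody : list atom }.

Definition rhead_atom (r : rule) : atom := Atom (rhead r) (map Var (rvars r)).

Definition rule_vars (r : rule) : list nat := rvars r ++ flat_map avars (rbody r).

Definition rename_rule (rho : nat -> nat) (r : rule) : rule :=
  Rule (rhead r) (map rho (rvars r)) (map (asubst (fun x => Var (rho x))) (rbody r)).

Definition injective_nat (rho : nat -> nat) : Prop :=
  forall x y, rho x = rho y -> x = y.

Inductive formula : Type :=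
| FAtom (a : atom)
| FFalse
| FImp (phi psi : formula)
| FAll (x : nat) (phi : formula).

Fixpoint fpreds_in (Q : P -> Prop) (phi : formula) : Prop :=
  match phi with
  | FAtom a => Q (pred_of a)
  | FFalse => True
  | FImp phi psi => fpreds_in Q phi /\ fpreds_in Q psi
  | FAll _ phi => fpreds_in Q phi
  end.

Record structure : Type := Structure {
  dom : Type;
  dom_inh : dom;
  ifun : F -> list dom -> dom;
  ipred : P -> list dom -> Prop }.

Fixpoint teval (M : structure) (v : nat -> dom M) (t : term) : dom M :=
  match t with
  | Var x => v x
  | Fn f ts => @ifun M f (map (teval M v) ts)
  end.

Definition aholds (M : structure) (v : nat -> dom M) (a : atom) : Prop :=
  @ipred M (pred_of a) (map (teval M v) (args_of a)).

Definition upd (M : structure) (v : nat -> dom M) (x : nat) (d : dom M) : nat -> dom M :=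
  fun y => if Nat.eqb y x then d else v y.

Fixpoint sat (M : structure) (v : nat -> dom M) (phi : formula) : Prop :=
  match phi with
  | FAtom a => aholds M v a
  | FFalse => False
  | FImp phi psi => sat M v phi -> sat M v psi
  | FAll x phi => forall d : dom M, sat M (upd M v x d) phi
  end.

Definition normalised (is_cpred : P -> Prop) (r : rule) : Prop :=
  ~ is_cpred (rhead r) /\ NoDup (rvars r) /\
  forall b, In b (rbody r) ->
    is_cpred (pred_of b) \/
    (~ is_cpred (pred_of b) /\
     exists xs, NoDup xs /\ args_of b = map Var xs).

Record caba : Type := CABA {
  (* constraints C = atoms whose predicate is a constraint predicate *)
  is_cpred : P -> Prop;
  ceq : P;
  ceq_cpred : is_cpred ceq;
  CT : formula -> Prop;
  CT_lang : forall phi, CT phi -> fpreds_in is_cpred phi;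
  is_rule : rule -> Prop;
  rules_normalised : forall r, is_rule r -> normalised is_cpred r;
  (* assumptions A = atoms whose predicate is an assumption predicate *)
  is_apred : P -> Prop;
  apred_not_cpred : forall p, is_apred p -> ~ is_cpred p;
  apred_nonempty : exists p, is_apred p;
  apred_not_head : forall r, is_rule r -> ~ is_apred (rhead r);
  (* contrary: contrary of p(t) is cp(t) *)
  contrary_pred : P -> P;
  contrary_not_cpred : forall p, is_apred p -> ~ is_cpred (contrary_pred p) }.

Section Framework.
Variable fw : caba.

Definition is_constraint (a : atom) : Prop := is_cpred fw (pred_of a).
Definition is_assumption (a : atom) : Prop := is_apred fw (pred_of a).

Definition model (M : structure) : Prop :=
  (forall l, @ipred M (ceq fw) l <-> exists d, l = [d; d]) /\
  (forall phi, CT fw phi -> forall v, sat M v phi).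

Definition consistent (C : list atom) : Prop :=
  (forall c, In c C -> is_constraint c) /\
  forall M, model M -> exists v : nat -> dom M, forall c, In c C -> aholds M v c.

(** argument trees: leaves are [TTrue] or atoms; an inner node records its
    label, the rule r of R used and the renamed-apart copy c of r *)
Inductive tree : Type :=
| TTrue
| TLeaf (a : atom)
| TNode (a : atom) (r c : rule) (ch : list tree).

Definition label (T : tree) : option atom :=
  match T with
  | TTrue => None
  | TLeaf a => Some a
  | TNode a _ _ _ => Some a
  end.

Fixpoint tvalid (T : tree) : Prop :=
  match T with
  | TTrue => True
  | TLeaf a => is_constraint a \/ is_assumption a
  | TNode a r c ch =>
      is_rule fw r /\
      (exists rho, injective_nat rho /\ c = rename_rule rho r) /\
      pred_of a = rhead c /\
      length (args_of a) = length (rvars c) /\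
      (let th := mk_subst (rvars c) (args_of a) in
       match rbody c with
       | [] => ch = [TTrue]
       | body => map label ch = map (fun b => Some (asubst th b)) body
       end) /\
      (fix allv (l : list tree) : Prop :=
         match l with [] => True | T' :: l' => tvalid T' /\ allv l' end) ch
  end.

Fixpoint tleaves (T : tree) : list atom :=
  match T with
  | TTrue => []
  | TLeaf a => [a]
  | TNode _ _ _ ch => flat_map tleaves ch
  end.

Fixpoint trules (T : tree) : list rule :=
  match T with
  | TTrue => []
  | TLeaf _ => []
  | TNode _ r _ ch => r :: flat_map trules ch
  end.

Fixpoint tcopies (T : tree) : list rule :=
  match T with
  | TTrue => []
  | TLeaf _ => []
  | TNode _ _ c ch => c :: flat_map tcopies ch
  end.

Definition disjoint (l1 l2 : list nat) : Prop := forall x, In x l1 -> ~ In x l2.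

Definition renamed_apart (T : tree) (s : atom) : Prop :=
  let cs := tcopies T in
  (forall i j, i <> j -> i < length cs -> j < length cs ->
     disjoint (rule_vars (nth i cs (Rule (ceq fw) [] [])))
              (rule_vars (nth j cs (Rule (ceq fw) [] [])))) /\
  (forall c, In c cs -> disjoint (rule_vars c) (avars s)).

Record carg : Type := CArg { aC : list atom; aA : list atom; aR : list rule; claim : atom }.

Definition seteq {T : Type} (l1 l2 : list T) : Prop := forall x, In x l1 <-> In x l2.

Definition tight (al : carg) : Prop :=
  ~ is_constraint (claim al) /\
  consistent (aC al) /\
  exists T : tree,
    tvalid T /\ label T = Some (claim al) /\ renamed_apart T (claim al) /\
    (forall x, In x (aC al) <-> In x (tleaves T) /\ is_constraint x) /\
    (forall x, In x (aA al) <-> In x (tleaves T) /\ is_assumption x) /\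
    seteq (aR al) (trules T).

Definition most_general (al : carg) : Prop :=
  tight al /\ exists xs, NoDup xs /\ args_of (claim al) = map Var xs.

Definition cinst_via (al' al : carg) (th : subst) (D : list atom) : Prop :=
  (forall d, In d D -> is_constraint d) /\
  seteq (aC al') (map (asubst th) (aC al) ++ D) /\
  seteq (aA al') (map (asubst th) (aA al)) /\
  seteq (aR al') (aR al) /\
  claim al' = asubst th (claim al) /\
  consistent (aC al').

Definition cinst (al' al : carg) : Prop := exists th D, cinst_via al' al th D.

Definition is_carg (al' : carg) : Prop := exists al, tight al /\ cinst al' al.
Definition is_mgcarg (al : carg) : Prop := most_general al.

Definition ground_carg (al : carg) : Prop :=
  (forall a, In a (aC al) -> aground a) /\
  (forall a, In a (aA al) -> aground a) /\
  aground (claim al).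

Definition GrCInst (al : carg) (al' : carg) : Prop := cinst al' al /\ ground_carg al'.
Definition GrCInstS (Gamma : carg -> Prop) (al' : carg) : Prop :=
  exists al, Gamma al /\ GrCInst al al'.

End Framework.
End CABA.

(* Main.v *)
Require Import Defs.
From Stdlib Require Import List Lia Classical Arith PeanoNat.
Import ListNotations.

Section S.
Context {F P : Type}.

Fixpoint term_ind' (Q : @term F -> Prop) (HV : forall x, Q (Var x))
  (HF : forall f ts, Forall Q ts -> Q (Fn f ts)) (t : term) : Q t :=
  match t with
  | Var x => HV x
  | Fn f ts => HF f ts ((fix g (l : list term) : Forall Q l :=
       match l with [] => Forall_nil _ | x :: l' => Forall_cons _ (term_ind' Q HV HF x) (g l') end) ts)
  end.

Lemma tsubst_var (t : @term F) : tsubst Var t = t.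
Proof.
  induction t using term_ind'; simpl; auto.
  f_equal. rewrite <- (map_id ts) at 2. apply map_ext_in.
  intros a Ha. rewrite Forall_forall in H. auto.
Qed.

Lemma asubst_var (a : @atom F P) : asubst Var a = a.
Proof.
  destruct a as [p ts]; unfold asubst; simpl. f_equal.
  rewrite <- (map_id ts) at 2. apply map_ext. apply tsubst_var.
Qed.

Lemma tsubst_comp (th1 th2 : subst) (t : @term F) :
  tsubst th1 (tsubst th2 t) = tsubst (fun z => tsubst th1 (th2 z)) t.
Proof.
  induction t using term_ind'; simpl; auto.
  f_equal. rewrite map_map. apply map_ext_in.
  intros a Ha. rewrite Forall_forall in H. auto.
Qed.

Lemma asubst_comp (th1 th2 : subst) (a : @atom F P) :
  asubst th1 (asubst th2 a) = asubst (fun z => tsubst th1 (th2 z)) a.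
Proof.
  destruct a as [p ts]; unfold asubst; simpl. f_equal.
  rewrite map_map. apply map_ext. apply tsubst_comp.
Qed.

Lemma teval_subst (M : @structure F P) v th (t : @term F) :
  teval M v (tsubst th t) = teval M (fun z => teval M v (th z)) t.
Proof.
  induction t using term_ind'; simpl; auto.
  f_equal. rewrite map_map. apply map_ext_in.
  intros a Ha. rewrite Forall_forall in H. auto.
Qed.

Lemma aholds_subst (M : @structure F P) v th (a : @atom F P) :
  aholds M v (asubst th a) <-> aholds M (fun z => teval M v (th z)) a.
Proof.
  destruct a as [p ts]; unfold aholds, asubst; simpl.
  rewrite map_map. erewrite map_ext; [reflexivity|]. intro; apply teval_subst.
Qed.

Lemma mk_subst_sig (sg : subst) xs (ts : list (@term F)) z :
  sg z = Var z ->
  tsubst sg (mk_subst xs ts z) = mk_subst xs (map (tsubst sg) ts) z.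
Proof.
  revert ts; induction xs as [|x xs IH]; intros [|t ts] Hz; simpl; auto.
  destruct (Nat.eqb z x); auto.
Qed.

Lemma tsubst_mk (sg : subst) xs (ts : list (@term F)) u :
  (forall z, In z (tvars u) -> sg z = Var z) ->
  tsubst sg (tsubst (mk_subst xs ts) u) = tsubst (mk_subst xs (map (tsubst sg) ts)) u.
Proof.
  induction u using term_ind'; intros Hz; simpl.
  - apply mk_subst_sig. apply Hz; simpl; auto.
  - f_equal. rewrite map_map. apply map_ext_in. intros a Ha.
    rewrite Forall_forall in H. apply H; auto.
    intros z Hz'. apply Hz. simpl. apply in_flat_map. eauto.
Qed.

Lemma asubst_mk (sg : subst) xs (ts : list (@term F)) (b : @atom F P) :
  (forall z, In z (avars b) -> sg z = Var z) ->
  asubst sg (asubst (mk_subst xs ts) b) = asubst (mk_subst xs (map (tsubst sg) ts)) b.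
Proof.
  destruct b as [p us]; unfold asubst, avars; simpl; intros Hz. f_equal.
  rewrite map_map. apply map_ext_in. intros a Ha. apply tsubst_mk.
  intros z Hz'. apply Hz. apply in_flat_map. eauto.
Qed.

Lemma mk_subst_out xs (ts : list (@term F)) z : ~ In z xs -> mk_subst xs ts z = Var z.
Proof.
  revert ts; induction xs as [|x xs IH]; intros [|t ts] Hz; simpl; auto.
  destruct (Nat.eqb z x) eqn:E.
  - apply Nat.eqb_eq in E. subst. exfalso; apply Hz; simpl; auto.
  - apply IH. intro; apply Hz; simpl; auto.
Qed.

Lemma mk_subst_on xs (ts : list (@term F)) : NoDup xs -> length xs = length ts ->
  map (mk_subst xs ts) xs = ts.
Proof.
  revert ts; induction xs as [|x xs IH]; intros [|t ts] Hn Hl; simpl in *; try discriminate; auto.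
  rewrite Nat.eqb_refl. f_equal. inversion Hn; subst.
  transitivity (map (mk_subst xs ts) xs); [|apply IH; auto].
  apply map_ext_in. intros y Hy.
  destruct (Nat.eqb y x) eqn:E; auto. apply Nat.eqb_eq in E; subst; contradiction.
Qed.

End S.

Section S.
Context {F P : Type} (fw : @caba F P).

Fixpoint tree_ind' (Q : @tree F P -> Prop) (H0 : Q TTrue) (H1 : forall a, Q (TLeaf a))
  (H2 : forall a r c ch, Forall Q ch -> Q (TNode a r c ch)) (T : tree) : Q T :=
  match T with
  | TTrue => H0
  | TLeaf a => H1 a
  | TNode a r c ch => H2 a r c ch ((fix g (l : list tree) : Forall Q l :=
       match l with [] => Forall_nil _ | x :: l' => Forall_cons _ (tree_ind' Q H0 H1 H2 x) (g l') end) ch)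
  end.

Fixpoint lift (a' : @atom F P) (T : tree) {struct T} : tree :=
  match T with
  | TTrue => TTrue
  | TLeaf _ => TLeaf a'
  | TNode _ r c ch => TNode a' r c
     ((fix go (l : list tree) (bs : list atom) {struct l} : list tree :=
        match l, bs with
        | T1 :: l1, b :: bs1 => lift (asubst (mk_subst (rvars c) (args_of a')) b) T1 :: go l1 bs1
        | _, _ => l end) ch (rbody c))
  end.

Fixpoint golift (th : subst) (l : list tree) (bs : list atom) : list tree :=
  match l, bs with
  | T1 :: l1, b :: bs1 => lift (asubst th b) T1 :: golift th l1 bs1
  | _, _ => l end.

Lemma lift_node a' a r c ch :
  lift a' (TNode a r c ch) = TNode a' r c (golift (mk_subst (rvars c) (args_of a')) ch (rbody c)).
Proof.
  simpl. f_equal. generalize (rbody c). induction ch as [|T1 l IH]; intros [|b bs]; simpl; auto.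
  f_equal. apply IH.
Qed.

Lemma tvalid_node a r c ch :
  tvalid fw (TNode a r c ch) <->
  is_rule fw r /\
      (exists rho, injective_nat rho /\ c = rename_rule rho r) /\
      pred_of a = rhead c /\
      length (args_of a) = length (rvars c) /\
      (let th := mk_subst (rvars c) (args_of a) in
       match rbody c with
       | [] => ch = [TTrue]
       | body => map label ch = map (fun b => Some (asubst th b)) body
       end) /\ Forall (tvalid fw) ch.
Proof.
  simpl. assert (E : forall l : list tree, (fix allv (l : list tree) : Prop :=
         match l with [] => True | T' :: l' => tvalid fw T' /\ allv l' end) l <-> Forall (tvalid fw) l).
  { induction l; simpl. split; auto. rewrite Forall_cons_iff. tauto. }
  rewrite E. tauto.
Qed.

End S.

Section S.
Context {F P : Type} (fw : @caba F P) (sg : @subst F).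

Definition LQ (T : @tree F P) : Prop := forall a' a, tvalid fw T -> label T = Some a -> asubst sg a' = a ->
 (forall c, In c (tcopies T) -> forall z, In z (rule_vars c) -> sg z = Var z) ->
 tvalid fw (lift a' T) /\ label (lift a' T) = Some a' /\ tcopies (lift a' T) = tcopies T /\
 trules (lift a' T) = trules T /\ map (asubst sg) (tleaves (lift a' T)) = tleaves T.

Lemma golift_ok th th' (ch : list tree) : Forall LQ ch -> forall bs,
  (forall b, In b bs -> asubst sg (asubst th' b) = asubst th b) ->
  map label ch = map (fun b => Some (asubst th b)) bs -> Forall (tvalid fw) ch ->
  (forall c, In c (flat_map tcopies ch) -> forall z, In z (rule_vars c) -> sg z = Var z) ->
  map label (golift th' ch bs) = map (fun b => Some (asubst th' b)) bs /\
  Forall (tvalid fw) (golift th' ch bs) /\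
  flat_map tcopies (golift th' ch bs) = flat_map tcopies ch /\
  flat_map trules (golift th' ch bs) = flat_map trules ch /\
  map (asubst sg) (flat_map tleaves (golift th' ch bs)) = flat_map tleaves ch.
Proof.
  induction ch as [|T1 l IH]; intros HQ [|b bs] Hb Hl Hv Hc; simpl in *; try discriminate.
  - repeat split; auto.
  - inversion Hl as [[H1 H2]]. inversion HQ; subst. inversion Hv; subst.
    destruct (H3 (asubst th' b) (asubst th b)) as (A1 & A2 & A3 & A4 & A5); auto.
    { intros c Hc' z Hz. apply (Hc c); auto. apply in_or_app; auto. }
    destruct (IH H4 bs) as (B1 & B2 & B3 & B4 & B5); auto.
    { intros c Hc' z Hz. apply (Hc c); auto. apply in_or_app; auto. }
    rewrite A2, B1. repeat split; auto.
    + rewrite A3, B3; auto.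
    + rewrite A4, B4; auto.
    + rewrite map_app, A5, B5; auto.
Qed.

Lemma lift_ok T : LQ T.
Proof.
  induction T as [| a0 | a0 r c ch IH] using tree_ind'; unfold LQ; intros a' a Hv Hl Hs Hc; simpl in Hl; try discriminate.
  - inversion Hl; subst. simpl. unfold is_constraint, is_assumption in *. repeat split; auto.
  - inversion Hl; subst a0. clear Hl.
    rewrite lift_node. apply tvalid_node in Hv.
    destruct Hv as (V1 & V2 & V3 & V4 & V5 & V6).
    assert (Hargs : args_of a = map (tsubst sg) (args_of a')) by (subst a; reflexivity).
    assert (Hpred : pred_of a = pred_of a') by (subst a; reflexivity).
    assert (Hkey : forall b, In b (rbody c) ->
      asubst sg (asubst (mk_subst (rvars c) (args_of a')) b) = asubst (mk_subst (rvars c) (args_of a)) b).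
    { intros b Hb. rewrite Hargs. apply asubst_mk. intros z Hz. apply (Hc c). simpl; auto.
      unfold rule_vars. apply in_or_app. right. apply in_flat_map. eauto. }
    cbv zeta in V5.
    destruct (rbody c) as [|b0 bs] eqn:Eb.
    + subst ch.
      assert (TV : tvalid fw (TNode a' r c (golift (mk_subst (rvars c) (args_of a')) [TTrue] []))).
      { apply tvalid_node. rewrite Eb. repeat split; auto.
        * rewrite <- Hpred; auto.
        * rewrite <- V4, Hargs, length_map; auto. }
      split; [exact TV|]. simpl. repeat split; auto.
    + destruct (golift_ok (mk_subst (rvars c) (args_of a)) (mk_subst (rvars c) (args_of a')) ch IH (b0 :: bs))
        as (B1 & B2 & B3 & B4 & B5); auto.
      { intros c' Hc' z Hz. apply (Hc c'); simpl; auto. }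
      assert (TV : tvalid fw (TNode a' r c (golift (mk_subst (rvars c) (args_of a')) ch (b0 :: bs)))).
      { apply tvalid_node. rewrite Eb. repeat split; auto.
        * rewrite <- Hpred; auto.
        * rewrite <- V4, Hargs, length_map; auto. }
      split; [exact TV|]. simpl. rewrite B3, B4, B5. repeat split; auto.
Qed.

End S.

Section S.
Context {F P : Type} (fw : @caba F P).

Lemma seteq_map {A B} (f : A -> B) l l' : seteq l l' -> seteq (map f l) (map f l').
Proof. intros H x; rewrite !in_map_iff; split; intros [y [E Hy]]; exists y; split; auto; apply H; auto. Qed.

Lemma cinst_trans (al1 al2 al3 : @carg F P) : cinst fw al1 al2 -> cinst fw al2 al3 -> cinst fw al1 al3.
Proof.
  intros [th1 [D1 (H1 & H2 & H3 & H4 & H5 & H6)]] [th2 [D2 (G1 & G2 & G3 & G4 & G5 & G6)]].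
  exists (fun z => tsubst th1 (th2 z)), (map (@asubst F P th1) D2 ++ D1).
  assert (Hm : forall l : list (@atom F P), map (asubst th1) (map (asubst th2) l) = map (asubst (fun z => tsubst th1 (th2 z))) l).
  { intro l. rewrite map_map. apply map_ext. intro; apply asubst_comp. }
  repeat split.
  - intros d Hd. apply in_app_iff in Hd as [Hd|Hd]; auto.
    apply in_map_iff in Hd as [y [E Hy]]. subst. apply G1 in Hy. exact Hy.
  - intro Hx. apply H2 in Hx. apply in_app_iff in Hx as [Hx|Hx].
    + apply (seteq_map (asubst th1) _ _ G2) in Hx. rewrite map_app, Hm in Hx.
      rewrite app_assoc. apply in_app_iff. left. exact Hx.
    + apply in_app_iff; right; apply in_app_iff; right; auto.
  - intro Hx. apply H2. rewrite app_assoc in Hx. apply in_app_iff in Hx as [Hx|Hx].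
    + apply in_app_iff; left. apply (seteq_map (asubst th1) _ _ G2). rewrite map_app, Hm. exact Hx.
    + apply in_app_iff; right; auto.
  - intro Hx. apply H3 in Hx. apply (seteq_map (asubst th1) _ _ G3) in Hx. rewrite Hm in Hx. exact Hx.
  - intro Hx. apply H3. apply (seteq_map (asubst th1) _ _ G3). rewrite Hm. exact Hx.
  - intro Hx. apply G4, H4, Hx.
  - intro Hx. apply H4, G4, Hx.
  - rewrite H5, G5. apply asubst_comp.
  - apply H6.
  - apply H6.
Qed.

Lemma tight_cinst_self (al : @carg F P) : tight fw al -> cinst fw al al.
Proof.
  intros [_ [Hc _]]. exists Var, []. repeat split; simpl; try tauto.
  - intro Hx. rewrite app_nil_r. rewrite map_ext with (g := fun a => a) by apply asubst_var. rewrite map_id; auto.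
  - rewrite app_nil_r, map_ext with (g := fun a => a) by apply asubst_var. rewrite map_id; auto.
  - intro Hx. rewrite map_ext with (g := fun a => a) by apply asubst_var. rewrite map_id; auto.
  - rewrite map_ext with (g := fun a => a) by apply asubst_var. rewrite map_id; auto.
  - rewrite asubst_var; auto.
  - apply Hc.
  - apply Hc.
Qed.

Lemma filter_ex (Q : @atom F P -> Prop) (L : list atom) : exists C, forall x, In x C <-> In x L /\ Q x.
Proof.
  induction L as [|a L [C HC]].
  - exists []. simpl. tauto.
  - destruct (classic (Q a)) as [Ha|Ha].
    + exists (a :: C). intro x. simpl. rewrite HC. split; [intros [E|E]; subst; tauto| tauto].
    + exists C. intro x. simpl. rewrite HC. split; [tauto|]. intros [[E|E] Hq]; subst; tauto.
Qed.

Fixpoint mx (l : list nat) : nat := match l with [] => 0 | x :: l => Nat.max x (mx l) end.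
Lemma mx_ge l x : In x l -> x <= mx l.
Proof. induction l; simpl; [tauto|]. intros [E|E]; subst; try lia. apply IHl in E. lia. Qed.

Lemma mg_exists (al0 : @carg F P) : tight fw al0 -> exists alm, most_general fw alm /\ cinst fw al0 alm.
Proof.
  intros Ht. destruct Ht as (Hnc & Hcons & T & Tv & Tl & Tra & TC & TA & TR).
  set (a := claim al0) in *.
  set (N := S (mx (flat_map rule_vars (tcopies T)))).
  set (Y := seq N (length (args_of a))).
  set (sg := mk_subst Y (args_of a)).
  set (a' := @Atom F P (pred_of a) (map Var Y)).
  assert (HY : NoDup Y) by apply seq_NoDup.
  assert (Hfresh : forall c, In c (tcopies T) -> forall z, In z (rule_vars c) -> ~ In z Y).
  { intros c Hc z Hz Hy. unfold Y in Hy. apply in_seq in Hy.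
    assert (z <= mx (flat_map rule_vars (tcopies T))) by (apply mx_ge, in_flat_map; eauto).
    unfold N in Hy. lia. }
  assert (Hs : asubst sg a' = a).
  { unfold a', asubst; simpl. rewrite map_map. simpl. unfold sg. rewrite mk_subst_on; auto.
    - destruct a; reflexivity.
    - unfold Y. apply length_seq. }
  destruct (lift_ok fw sg T a' a Tv Tl Hs) as (L1 & L2 & L3 & L4 & L5).
  { intros c Hc z Hz. apply mk_subst_out. eapply Hfresh; eauto. }
  destruct (filter_ex (is_constraint fw) (tleaves (lift a' T))) as [C' HC'].
  destruct (filter_ex (is_assumption fw) (tleaves (lift a' T))) as [A' HA'].
  assert (EC : seteq (aC al0) (map (asubst sg) C' ++ [])).
  { intro x. rewrite app_nil_r, TC, in_map_iff, <- L5, in_map_iff. split.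
    - intros [[y [E Hy]] Hx]. exists y. split; auto. apply HC'. split; auto. subst; exact Hx.
    - intros [y [E Hy]]. apply HC' in Hy as [Hy Hq]. split; [eauto|]. subst; exact Hq. }
  assert (EA : seteq (aA al0) (map (asubst sg) A')).
  { intro x. rewrite TA, in_map_iff, <- L5, in_map_iff. split.
    - intros [[y [E Hy]] Hx]. exists y. split; auto. apply HA'. split; auto. subst; exact Hx.
    - intros [y [E Hy]]. apply HA' in Hy as [Hy Hq]. split; [eauto|]. subst; exact Hq. }
  exists (CArg C' A' (trules T) a'). split.
  - split.
    + split; [exact Hnc|]. split.
      * split.
        -- intros c Hc. apply HC' in Hc. apply Hc.
        -- intros M HM. destruct Hcons as [_ Hcons]. destruct (Hcons M HM) as [v Hv].
           exists (fun z => teval M v (sg z)). intros c Hc. apply aholds_subst. apply Hv.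
           apply EC. rewrite app_nil_r. apply in_map; auto.
      * exists (lift a' T). simpl. repeat split; auto.
        1: { destruct Tra as [Tra _]. rewrite L3. apply Tra. }
        1: { intros c Hc. rewrite L3 in Hc. intros z Hz Hz'. eapply Hfresh; eauto.
           unfold a', avars in Hz'. simpl in Hz'. apply in_flat_map in Hz' as [t [Ht Hzt]].
           apply in_map_iff in Ht as [y [E Hy]]. subst t. simpl in Hzt. destruct Hzt as [E|[]]; subst; auto. }
        all: intros.
        all: first [ apply HC'; assumption | apply HA'; assumption | apply HC'; tauto | apply HA'; tauto
                   | rewrite L4; tauto | rewrite <- L4; tauto | idtac ].
        all: match goal with H : _ |- _ => first [apply HC' in H | apply HA' in H]; tauto end.
    + simpl. exists Y. split; auto.
  - exists sg, []. repeat split; simpl; auto; try tauto.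
    + apply EC.
    + apply EC.
    + apply EA.
    + apply EA.
    + apply TR.
    + apply TR.
    + apply Hcons.
    + apply Hcons.
Qed.

End S.

Theorem corollary5p9 (F P : Type) (fw : @caba F P) (al' : @carg F P) :
  GrCInstS fw (is_carg fw) al' <-> GrCInstS fw (is_mgcarg fw) al'.
Proof.
  split.
  - intros [al [[al0 [Ht Hi]] [Hi' Hg]]].
    destruct (mg_exists fw al0 Ht) as [alm [Hm Hi0]].
    exists alm. split; [exact Hm|]. split; [|exact Hg].
    eapply cinst_trans; [exact Hi'|]. eapply cinst_trans; eauto.
  - intros [al [Hm Hg]]. exists al. split; auto.
    exists al. split; [apply Hm|]. apply tight_cinst_self, Hm.
Qed.
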